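(* Let $(L_x)_{x\in S}$ be an $S$-glued system with $S$-glued sum $L$. If every $L_x$ is semimodular, then $L$ is a semimodular lattice of finite length. If every $L_x$ is modular, then $L$ is a modular lattice of finite length.
   Context: Let $S$ be a lattice of finite length (every chain in $S$ is finite), with order $\le$, join $\vee$ and meet $\wedge$; $x\prec y$ means that $y$ covers $x$. An \emph{$S$-glued system} is a family $(L_x,\le_x)_{x\in S}$ of lattices of finite length (with join $+_x$, meet $\cdot_x$, least element $0_x$, greatest element $1_x$), whose underlying sets may overlap, such that for all $x,y\in S$: (1) if $x\le y$ and $L_x\cap L_y\ne\emptyset$, then $L_x\cap L_y$ is a filter of $L_x$ and an ideal of $L_y$; (2) in the situation of (1), for all $a,b\in L_x\cap L_y$: $a\le_x b$ iff $a\le_y b$; (3) if $x\prec y$ then $L_x\cap L_y\ne\emptyset$; (4) $L_x\cap L_y\subseteq L_{x\wedge y}\cap L_{x\vee y}$. The \emph{$S$-glued sum} of the system is the set $L=\bigcup_{x\in S}L_x$ equipped with the relation $\le$ defined as the transitive closure of $\bigcup_{x\in S}\le_x$; it is a lattice. A lattice $K$ of finite length is \emph{semimodular} if whenever $b\ne c$ both cover $a$ in $K$, then $b\vee c$ covers both $b$ and $c$. A lattice has finite length if all its chains are finite. *)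

(* Defs.v *)
From Stdlib Require Import List Relations.

Section Order.
Context {U : Type} (P : U -> Prop) (le : U -> U -> Prop).

Definition poset : Prop :=
  (forall a, P a -> le a a) /\
  (forall a b, P a -> P b -> le a b -> le b a -> a = b) /\
  (forall a b c, P a -> P b -> P c -> le a b -> le b c -> le a c).

Definition is_lub (a b j : U) : Prop :=
  P j /\ le a j /\ le b j /\ (forall z, P z -> le a z -> le b z -> le j z).

Definition is_glb (a b m : U) : Prop :=
  P m /\ le m a /\ le m b /\ (forall z, P z -> le z a -> le z b -> le z m).

Definition lattice : Prop :=
  poset /\ (exists a, P a) /\
  (forall a b, P a -> P b -> (exists j, is_lub a b j) /\ (exists m, is_glb a b m)).

Definition chain (C : U -> Prop) : Prop :=
  (forall a, C a -> P a) /\ (forall a b, C a -> C b -> le a b \/ le b a).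

Definition finite_set (C : U -> Prop) : Prop :=
  exists s : list U, forall a, C a -> In a s.

Definition finite_length : Prop :=
  forall C, chain C -> finite_set C.

Definition covers (a b : U) : Prop :=
  P a /\ P b /\ le a b /\ a <> b /\
  (forall z, P z -> le a z -> le z b -> z = a \/ z = b).

Definition semimodular : Prop :=
  forall a b c j, P a -> P b -> P c -> b <> c ->
    covers a b -> covers a c -> is_lub b c j -> covers b j /\ covers c j.

(* modular law: a <= c implies a v (b ^ c) = (a v b) ^ c *)
Definition modular : Prop :=
  forall a b c m j1 j2 m2, P a -> P b -> P c -> le a c ->
    is_glb b c m -> is_lub a m j1 -> is_lub a b j2 -> is_glb j2 c m2 -> j1 = m2.

Definition filter_of (F : U -> Prop) : Prop :=
  (exists a, F a) /\ (forall a, F a -> P a) /\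
  (forall a b, F a -> P b -> le a b -> F b) /\
  (forall a b m, F a -> F b -> is_glb a b m -> F m).

Definition ideal_of (I : U -> Prop) : Prop :=
  (exists a, I a) /\ (forall a, I a -> P a) /\
  (forall a b, I a -> P b -> le b a -> I b) /\
  (forall a b j, I a -> I b -> is_lub a b j -> I j).

End Order.

Definition fullset {S : Type} : S -> Prop := fun _ => True.

(* An S-glued system: the lattice S is given by (fullset, leS);
   the lattice L_x has carrier Lc x : U -> Prop and order le x. *)
Definition glued_system {S U : Type} (leS : S -> S -> Prop)
    (Lc : S -> U -> Prop) (le : S -> U -> U -> Prop) : Prop :=
  (forall x, lattice (Lc x) (le x) /\ finite_length (Lc x) (le x)) /\
  (forall x y, leS x y -> (exists a, Lc x a /\ Lc y a) ->
     filter_of (Lc x) (le x) (fun a => Lc x a /\ Lc y a) /\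
     ideal_of (Lc y) (le y) (fun a => Lc x a /\ Lc y a)) /\
  (forall x y a b, leS x y -> Lc x a -> Lc y a -> Lc x b -> Lc y b ->
     (le x a b <-> le y a b)) /\
  (forall x y, covers fullset leS x y -> exists a, Lc x a /\ Lc y a) /\
  (forall x y m j a, is_glb fullset leS x y m -> is_lub fullset leS x y j ->
     Lc x a -> Lc y a -> Lc m a /\ Lc j a).

Definition glued_carrier {S U : Type} (Lc : S -> U -> Prop) : U -> Prop :=
  fun a => exists x, Lc x a.

Definition glued_le {S U : Type} (Lc : S -> U -> Prop) (le : S -> U -> U -> Prop)
  : U -> U -> Prop :=
  clos_trans U (fun a b => exists x, Lc x a /\ Lc x b /\ le x a b).

(* Main.v *)
Require Import Defs.
From Stdlib Require Import List Relations.
From Stdlib Require Import Classical ClassicalEpsilon Lia Arith FunctionalExtensionality PropExtensionality.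

Section Gen.
Context {U : Type} (P : U -> Prop) (le : U -> U -> Prop).

Lemma poset_dual : poset P le -> poset P (fun a b => le b a).
Proof. intros [H1 [H2 H3]]. split; [|split]; eauto. Qed.

Lemma fl_dual : finite_length P le -> finite_length P (fun a b => le b a).
Proof. intros H C [HC1 HC2]. apply H. split; auto. Qed.

Lemma lattice_dual : lattice P le -> lattice P (fun a b => le b a).
Proof. intros [Hp [Hne Hj]]. split; [apply poset_dual; auto|split; auto].
  intros a b Ha Hb. destruct (Hj a b Ha Hb) as [[j Hjj] [m Hm]].
  split; [exists m | exists j]; assumption. Qed.

Lemma ltR_wf : poset P le -> finite_length P le ->
  well_founded (fun b a => P b /\ P a /\ le b a /\ b <> a).
Proof.
  intros [Hr [Ha Ht]] Hf a0. apply NNPP; intro H0.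
  set (R := fun b a => P b /\ P a /\ le b a /\ b <> a) in *.
  assert (Hstep : forall a : {a | ~ Acc R a}, {b : {b | ~ Acc R b} | R (proj1_sig b) (proj1_sig a)}).
  { intros [a Ha']. apply constructive_indefinite_description. apply NNPP; intro Hn.
    apply Ha'. constructor. intros b Hb. apply NNPP; intro Hb'. apply Hn.
    exists (exist _ b Hb'). exact Hb. }
  set (f := fix f n := match n with 0 => exist _ a0 H0 | S n => proj1_sig (Hstep (f n)) end).
  set (g := fun n => proj1_sig (f n)).
  assert (HR : forall n, R (g (S n)) (g n)).
  { intro n. unfold g. simpl. exact (proj2_sig (Hstep (f n))). }
  assert (HP : forall n, P (g n)). { intro n. destruct (HR n) as [_ [H _]]. exact H. }
  assert (Hle : forall k m, le (g (k + m)) (g m)).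
  { induction k; intro m. simpl. apply Hr, HP.
    apply Ht with (g (k + m)); auto. replace (S k + m) with (S (k + m)) by lia.
    apply HR. }
  assert (Hinj : forall m n, g m = g n -> m = n).
  { assert (Hl : forall m n, m < n -> g n <> g m).
    { intros m n Hmn E. destruct (HR m) as [_ [_ [H1 H2]]]. apply H2.
      apply Ha; auto. replace n with ((n - S m) + S m) in E by lia.
      rewrite <- E. apply Hle. }
    intros m n E. destruct (lt_eq_lt_dec m n) as [[H|H]|H]; auto.
    - exfalso. apply (Hl m n H). auto.
    - exfalso. apply (Hl n m H). auto. }
  destruct (Hf (fun a => exists n, a = g n)) as [s Hs].
  { split. intros a [n ->]. apply HP.
    intros a b [m ->] [n ->]. destruct (le_ge_dec m n).
    - right. replace n with ((n - m) + m) by lia. apply Hle.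
    - left. replace m with ((m - n) + n) by lia. apply Hle. }
  assert (Hnd : NoDup (map g (seq 0 (S (length s))))).
  { apply NoDup_map_NoDup_ForallPairs. intros a b _ _; apply Hinj. apply seq_NoDup. }
  apply NoDup_incl_length with (l' := s) in Hnd.
  - rewrite length_map, length_seq in Hnd. lia.
  - intros a Hin. apply in_map_iff in Hin. destruct Hin as [n [<- _]]. apply Hs. eauto.
Qed.

End Gen.
Section Gen2.
Context {U : Type} (P : U -> Prop) (le : U -> U -> Prop).

Lemma lt_ind : poset P le -> finite_length P le -> forall Q : U -> Prop,
  (forall a, P a -> (forall b, P b -> le b a -> b <> a -> Q b) -> Q a) ->
  forall a, P a -> Q a.
Proof.
  intros Hp Hf Q H a. induction a as [a IH] using (well_founded_ind (ltR_wf _ _ Hp Hf)).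
  intro Ha. apply H; [assumption|]. intros b Hb Hba Hne. apply IH; tauto.
Qed.

Lemma gt_ind : poset P le -> finite_length P le -> forall Q : U -> Prop,
  (forall a, P a -> (forall b, P b -> le a b -> b <> a -> Q b) -> Q a) ->
  forall a, P a -> Q a.
Proof.
  intros Hp Hf Q H a. induction a as [a IH] using (well_founded_ind (ltR_wf _ _ (poset_dual _ _ Hp) (fl_dual _ _ Hf))).
  intro Ha. apply H; [assumption|]. intros b Hb Hba Hne. apply IH; tauto.
Qed.

Lemma lower_cover : poset P le -> finite_length P le -> forall a b,
  P a -> P b -> le a b -> a <> b -> exists t, le a t /\ covers P le t b.
Proof.
  intros Hp Hf a b Ha Hb Hab Hne.
  assert (forall t, P t -> le a t -> le t b -> t <> b -> exists t0, le a t0 /\ covers P le t0 b).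
  { apply (gt_ind Hp Hf (fun t => le a t -> le t b -> t <> b -> exists t0, le a t0 /\ covers P le t0 b)).
    intros t Ht IH Hat Htb Htne. destruct Hp as [Hr [Has Htr]].
    destruct (classic (covers P le t b)) as [Hc|Hc]. eauto.
    apply not_and_or in Hc as [Hc|Hc]; [tauto|]. apply not_and_or in Hc as [Hc|Hc]; [tauto|].
    apply not_and_or in Hc as [Hc|Hc]; [tauto|]. apply not_and_or in Hc as [Hc|Hc]; [tauto|].
    apply not_all_ex_not in Hc as [z Hz].
    apply imply_to_and in Hz as [Pz Hz]. apply imply_to_and in Hz as [Htz Hz].
    apply imply_to_and in Hz as [Hzb Hz]. apply not_or_and in Hz as [Hz1 Hz2].
    apply (IH z); auto. apply (Htr a t z); auto. }
  apply (H a); auto. apply Hp; auto.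
Qed.

Lemma upper_cover : poset P le -> finite_length P le -> forall a b,
  P a -> P b -> le a b -> a <> b -> exists t, covers P le a t /\ le t b.
Proof.
  intros Hp Hf a b Ha Hb Hab Hne.
  assert (forall t, P t -> le t b -> le a t -> a <> t -> exists t0, covers P le a t0 /\ le t0 b).
  { apply (lt_ind Hp Hf (fun t => le t b -> le a t -> a <> t -> exists t0, covers P le a t0 /\ le t0 b)).
    intros t Ht IH Htb Hat Htne. destruct Hp as [Hr [Has Htr]].
    destruct (classic (covers P le a t)) as [Hc|Hc]. eauto.
    apply not_and_or in Hc as [Hc|Hc]; [tauto|]. apply not_and_or in Hc as [Hc|Hc]; [tauto|].
    apply not_and_or in Hc as [Hc|Hc]; [tauto|]. apply not_and_or in Hc as [Hc|Hc]; [tauto|].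
    apply not_all_ex_not in Hc as [z Hz].
    apply imply_to_and in Hz as [Pz Hz]. apply imply_to_and in Hz as [Htz Hz].
    apply imply_to_and in Hz as [Hzb Hz]. apply not_or_and in Hz as [Hz1 Hz2].
    apply (IH z); auto. apply (Htr z t b); auto. }
  apply (H b); auto. apply Hp; auto.
Qed.

Lemma bottom_exists : lattice P le -> finite_length P le ->
  exists o, P o /\ forall z, P z -> le o z.
Proof.
  intros [Hp [[a0 Ha0] Hl]] Hf.
  assert (forall a, P a -> exists o, P o /\ forall z, P z -> le o z).
  { apply (lt_ind Hp Hf). intros a Ha IH.
    destruct (classic (forall z, P z -> le a z)) as [H|H]. eauto.
    apply not_all_ex_not in H as [z Hz]. apply imply_to_and in Hz as [Pz Hz].
    destruct (Hl a z Ha Pz) as [_ [m [Pm [Hma [Hmz _]]]]].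
    apply (IH m Pm Hma). intro E. subst. auto. }
  eauto.
Qed.

Lemma lub_unique : poset P le -> forall a b j j', is_lub P le a b j -> is_lub P le a b j' -> j = j'.
Proof. intros [_ [Ha _]] a b j j' [P1 [A1 [B1 C1]]] [P2 [A2 [B2 C2]]]. apply Ha; auto. Qed.

Lemma glb_unique : poset P le -> forall a b j j', is_glb P le a b j -> is_glb P le a b j' -> j = j'.
Proof. intros [_ [Ha _]] a b j j' [P1 [A1 [B1 C1]]] [P2 [A2 [B2 C2]]]. apply Ha; auto. Qed.

Lemma lub_comm : forall a b j, is_lub P le a b j -> is_lub P le b a j.
Proof. intros a b j [H1 [H2 [H3 H4]]]. split; [|split; [|split]]; auto. Qed.
Lemma glb_comm : forall a b j, is_glb P le a b j -> is_glb P le b a j.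
Proof. intros a b j [H1 [H2 [H3 H4]]]. split; [|split; [|split]]; auto. Qed.

End Gen2.

Section Glued.
Context {S U : Type} (leS : S -> S -> Prop) (Lc : S -> U -> Prop) (le : S -> U -> U -> Prop).
Context (HSl : lattice fullset leS) (HSf : finite_length fullset leS) (HG : glued_system leS Lc le).

Let R := fun a b => exists y, Lc y a /\ Lc y b /\ le y a b.

Lemma Spo : poset fullset leS. Proof. apply HSl. Qed.
Lemma Sr x : leS x x. Proof. apply Spo. exact I. Qed.
Lemma Sa x y : leS x y -> leS y x -> x = y. Proof. intros. apply Spo; auto; exact I. Qed.
Lemma St x y z : leS x y -> leS y z -> leS x z. Proof. intros. eapply Spo; eauto; exact I. Qed.
Lemma Sj x y : exists j, is_lub fullset leS x y j. Proof. apply HSl; exact I. Qed.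
Lemma Sm x y : exists j, is_glb fullset leS x y j. Proof. apply HSl; exact I. Qed.

Lemma Lpo x : poset (Lc x) (le x). Proof. destruct HG as [H _]. apply H. Qed.
Lemma Lr x a : Lc x a -> le x a a. Proof. apply Lpo. Qed.
Lemma La x a b : Lc x a -> Lc x b -> le x a b -> le x b a -> a = b. Proof. apply Lpo. Qed.
Lemma Lt x a b c : Lc x a -> Lc x b -> Lc x c -> le x a b -> le x b c -> le x a c.
Proof. apply Lpo. Qed.
Lemma Llub x a b : Lc x a -> Lc x b -> exists j, is_lub (Lc x) (le x) a b j.
Proof. destruct HG as [H _]. apply H. Qed.
Lemma Lglb x a b : Lc x a -> Lc x b -> exists j, is_glb (Lc x) (le x) a b j.
Proof. destruct HG as [H _]. apply H. Qed.
Lemma Lfl x : finite_length (Lc x) (le x). Proof. destruct HG as [H _]. apply H. Qed.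
Lemma Lbot x : exists o, Lc x o /\ forall z, Lc x z -> le x o z.
Proof. destruct HG as [H _]. apply bottom_exists; apply H. Qed.

Lemma G1 x y c d : leS x y -> Lc x c -> Lc y c -> Lc y d -> le y d c -> Lc x d.
Proof. intros Hxy Hxc Hyc Hyd Hdc. destruct HG as [_ [H1 _]].
  destruct (H1 x y Hxy (ex_intro _ c (conj Hxc Hyc))) as [_ [_ [_ [Hd _]]]].
  apply (Hd c d (conj Hxc Hyc) Hyd Hdc). Qed.
Lemma G2 x y c d : leS x y -> Lc x c -> Lc y c -> Lc x d -> le x c d -> Lc y d.
Proof. intros Hxy Hxc Hyc Hxd Hcd. destruct HG as [_ [H1 _]].
  destruct (H1 x y Hxy (ex_intro _ c (conj Hxc Hyc))) as [[_ [_ [Hd _]]] _].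
  apply (Hd c d (conj Hxc Hyc) Hxd Hcd). Qed.
Lemma G1j x y a b j : leS x y -> Lc x a -> Lc y a -> Lc x b -> Lc y b ->
  is_lub (Lc y) (le y) a b j -> Lc x j.
Proof. intros Hxy Ha1 Ha2 Hb1 Hb2 Hj. destruct HG as [_ [H1 _]].
  destruct (H1 x y Hxy (ex_intro _ a (conj Ha1 Ha2))) as [_ [_ [_ [_ Hd]]]].
  apply (Hd a b j (conj Ha1 Ha2) (conj Hb1 Hb2) Hj). Qed.
Lemma G3 x y a b : leS x y -> Lc x a -> Lc y a -> Lc x b -> Lc y b -> le x a b -> le y a b.
Proof. intros. destruct HG as [_ [_ [Hg2 _]]]. apply (Hg2 x y a b); auto. Qed.
Lemma G3' x y a b : leS x y -> Lc x a -> Lc y a -> Lc x b -> Lc y b -> le y a b -> le x a b.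
Proof. intros. destruct HG as [_ [_ [Hg2 _]]]. apply (Hg2 x y a b); auto. Qed.
Lemma G4m x y m a : Lc x a -> Lc y a -> is_glb fullset leS x y m -> Lc m a.
Proof. intros. destruct HG as [_ [_ [_ [_ H4]]]]. destruct (Sj x y) as [j Hj].
  apply (H4 x y m j a); auto. Qed.
Lemma G4j x y j a : Lc x a -> Lc y a -> is_lub fullset leS x y j -> Lc j a.
Proof. intros. destruct HG as [_ [_ [_ [_ H4]]]]. destruct (Sm x y) as [m Hm].
  apply (H4 x y m j a); auto. Qed.
Lemma G5 x y a b : Lc x a -> Lc y a -> Lc x b -> Lc y b -> le x a b -> le y a b.
Proof. intros. destruct (Sm x y) as [m Hm]. pose proof Hm as [_ [Hmx [Hmy _]]].
  assert (Lc m a) by (apply (G4m x y m a); auto). assert (Lc m b) by (apply (G4m x y m b); auto).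
  apply (G3 m y); auto; apply (G3' m x); auto. Qed.
Lemma G3c x y : covers fullset leS x y -> exists a, Lc x a /\ Lc y a.
Proof. destruct HG as [_ [_ [_ [H3 _]]]]. apply H3. Qed.

Lemma cover1 u w v a : leS u w -> covers fullset leS w v -> Lc u a -> Lc v a -> Lc w a.
Proof. intros Huw Hc Hua Hva. destruct (G3c _ _ Hc) as [e [Hwe Hve]].
  pose proof Hc as [_ [_ [Hwv _]]]. destruct (Lbot v) as [o [Ho Hob]].
  assert (Lc w o) by (apply (G1 w v e o); auto). assert (Huv : leS u v) by (eapply St; eauto).
  assert (Lc u o) by (apply (G1 u v a o); auto).
  apply (G2 u w o a); auto. apply (G3' u v); auto. Qed.

Lemma convex u w v a : Lc u a -> Lc v a -> leS u w -> leS w v -> Lc w a.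
Proof. intros Hua Hva Huw Hwv.
  assert (Hm : forall v, fullset v -> forall w, leS u w -> leS w v -> Lc v a -> Lc w a).
  2:{ apply (Hm v I w); auto. } clear v w Hva Huw Hwv.
  apply (lt_ind _ _ Spo HSf (fun v => forall w, leS u w -> leS w v -> Lc v a -> Lc w a)).
  intros v _ IH w Huw Hwv Hva. destruct (classic (w = v)) as [E|E]. subst; auto.
  destruct (lower_cover _ _ Spo HSf w v I I Hwv E) as [t [Hwt Hc]].
  pose proof Hc as [_ [_ [Htv [Hne _]]]].
  apply (IH t I Htv Hne w); auto. apply (cover1 u t v a); auto. eapply St; eauto. Qed.

Definition Up a x := exists q, leS x q /\ Lc q a.
Definition Down a x := exists p, leS p x /\ Lc p a.

Lemma UpStep y c d x : Lc y c -> Lc y d -> le y c d -> Up c x -> Up d x.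
Proof. intros Hc Hd Hcd [q [Hxq Hq]]. destruct (Sj q y) as [j Hj]. pose proof Hj as [_ [Hqj [Hyj _]]].
  assert (Lc j c) by (apply (G4j q y j c); auto).
  exists j. split. apply (St x q j); auto. apply (G2 y j c d); auto. Qed.
Lemma DownStep y c d x : Lc y c -> Lc y d -> le y c d -> Down d x -> Down c x.
Proof. intros Hc Hd Hcd [p [Hpx Hp]]. destruct (Sm p y) as [m Hm]. pose proof Hm as [_ [Hmp [Hmy _]]].
  assert (Lc m d) by (apply (G4m p y m d); auto).
  exists m. split. apply (St m p x); auto. apply (G1 m y d c); auto. Qed.

Lemma UpProp a b x : clos_trans U R a b -> Up a x -> Up b x.
Proof. intro H. induction H as [a b Hab|a c b H1 IH1 H2 IH2]; intro Hu.
  - destruct Hab as [y [Ha [Hb Hl]]]. apply (UpStep y a b x); auto.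
  - auto. Qed.
Lemma DownProp a b x : clos_trans U R a b -> Down b x -> Down a x.
Proof. intro H. induction H as [a b Hab|a c b H1 IH1 H2 IH2]; intro Hu.
  - destruct Hab as [y [Ha [Hb Hl]]]. apply (DownStep y a b x); auto.
  - auto. Qed.

Lemma inLevel a x : Up a x -> Down a x -> Lc x a.
Proof. intros [q [H1 H2]] [p [H3 H4]]. apply (convex p x q); auto. Qed.

Lemma clamp d x q : Up d x -> Down d q -> leS x q -> exists t, leS x t /\ leS t q /\ Lc t d.
Proof. intros [r [Hxr Hr]] [p [Hpq Hp]] Hxq. destruct (Sj p r) as [j Hj].
  destruct (Sj p x) as [t Ht]. pose proof Hj as [_ [Hpj [Hrj Hjl]]]. pose proof Ht as [_ [Hpt [Hxt Htl]]].
  exists t. split; auto. split. apply Htl; auto; exact I.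
  assert (Lc j d) by (apply (G4j p r j d); auto).
  apply (convex p t j); auto. apply Htl; auto. exact I. apply (St x r j); auto. Qed.

Lemma Kp a b : clos_trans U R a b -> forall x, Up a x -> Down b x -> Lc x a /\ Lc x b /\ le x a b.
Proof. intro H. induction H as [a b Hab|a c b H1 IH1 H2 IH2]; intros x Hu Hd.
  - pose proof Hab as [y [Ha [Hb Hle]]].
    assert (Lc x a) by (apply inLevel; [auto| apply (DownStep y a b x); auto]).
    assert (Lc x b) by (apply inLevel; [apply (UpStep y a b x); auto|auto]).
    split; auto. split; auto. apply (G5 y x); auto.
  - assert (Up c x) by (apply (UpProp a c x); auto). assert (Down c x) by (apply (DownProp c b x); auto).
    destruct (IH1 x) as [A1 [A2 A3]]; auto. destruct (IH2 x) as [B1 [B2 B3]]; auto.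
    split; auto. split; auto. apply (Lt x a c b); auto. Qed.

Lemma K a b x : clos_trans U R a b -> Lc x a -> Lc x b -> le x a b.
Proof. intros H Ha Hb. apply (Kp a b H x). exists x; split; auto; apply Sr. exists x; split; auto; apply Sr. Qed.

Lemma gstep x a b : Lc x a -> Lc x b -> le x a b -> clos_trans U R a b.
Proof. intros. apply t_step. exists x; auto. Qed.

Lemma gle_anti a b : glued_carrier Lc a -> clos_trans U R a b -> clos_trans U R b a -> a = b.
Proof. intros [x Hx] H1 H2.
  assert (Up b x) by (apply (UpProp a b x H1); exists x; split; auto; apply Sr).
  assert (Down b x) by (apply (DownProp b a x H2); exists x; split; auto; apply Sr).
  assert (Lc x b) by (apply inLevel; auto).
  apply (La x); auto; apply K; auto. Qed.

Inductive Lift (x : S) (a : U) : S -> U -> Prop :=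
| Lift_refl : Lc x a -> Lift x a x a
| Lift_step : forall t q u o v, Lift x a t u -> leS t q -> t <> q ->
    Lc q o -> (forall z, Lc q z -> le q o z) -> Lc t o ->
    is_lub (Lc t) (le t) u o v -> Lift x a q v.

Lemma LiftP x a q v : Lift x a q v -> Lc x a /\ leS x q /\ Lc q v /\ clos_trans U R a v.
Proof. intro H. induction H as [Ha|t q u o v H IH Htq Hne Hqo Hbot Hto Hlub].
  - split; auto. split. apply Sr. split; auto. apply (gstep x); auto. apply Lr; auto.
  - destruct IH as [A1 [A2 [A3 A4]]]. destruct Hlub as [V1 [V2 [V3 V4]]].
    split; auto. split. apply (St x t q); auto. split. apply (G2 t q o v); auto.
    apply t_trans with u; auto. apply (gstep t); auto. Qed.

Lemma Ext x a t u : Lift x a t u -> forall q, leS t q -> exists v, Lift x a q v /\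
  (forall e, Lc t e -> Lc q e -> le t u e -> le q v e).
Proof. intros Hl q Htq.
  assert (Hm : forall q, fullset q -> leS t q -> exists v, Lift x a q v /\
    (forall e, Lc t e -> Lc q e -> le t u e -> le q v e)).
  2:{ apply Hm; auto. exact I. } clear q Htq.
  refine (lt_ind _ _ Spo HSf _ _). intros q _ IH Htq.
  destruct (classic (t = q)) as [E|E]. { subst. exists u. split; auto. }
  destruct (lower_cover _ _ Spo HSf t q I I Htq E) as [s [Hts Hc]].
  pose proof Hc as [_ [_ [Hsq [Hne _]]]].
  destruct (IH s I Hsq Hne Hts) as [vs [Hls Hps]].
  destruct (G3c _ _ Hc) as [c [Hsc Hqc]]. destruct (Lbot q) as [o [Ho Hob]].
  assert (Lc s o) by (apply (G1 s q c o); auto).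
  destruct (LiftP _ _ _ _ Hls) as [_ [_ [Hvs _]]].
  destruct (Llub s vs o) as [v Hv]; auto.
  exists v. split. apply (Lift_step x a s q vs o v); auto.
  intros e Hte Hqe Hue. assert (Hse : Lc s e) by (apply (convex t s q e); auto).
  pose proof Hv as [V1 [V2 [V3 V4]]].
  apply (G3 s q); auto. apply (G2 s q o v); auto. apply V4; auto.
  apply (G3' s q); auto. Qed.

Lemma Lift_ex x a q : Lc x a -> leS x q -> exists v, Lift x a q v.
Proof. intros Ha Hxq. destruct (Ext x a x a (Lift_refl x a Ha) q Hxq) as [v [Hv _]]. eauto. Qed.

Lemma Comp t u q v : Lift t u q v -> forall x a, Lift x a t u -> Lift x a q v.
Proof. intro H. induction H as [Ha|t' q u' o v H IH Htq Hne Hqo Hbot Hto Hlub]; intros x a Hxa; auto.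
  apply (Lift_step x a t' q u' o v); auto. Qed.

Lemma Mono t u q v : Lift t u q v -> forall d, Lc t d -> le t u d -> exists w, Lift t d q w /\ le q v w.
Proof. intro H. induction H as [Ha|t' q u' o v H IH Htq Hne Hqo Hbot Hto Hlub]; intros d Hd Hud.
  - exists d. split; auto. apply Lift_refl; auto.
  - destruct (IH d Hd Hud) as [w' [Hw' Hle]].
    destruct (LiftP _ _ _ _ Hw') as [_ [_ [Hw'c _]]]. destruct (LiftP _ _ _ _ H) as [_ [_ [Hu'c _]]].
    destruct (Llub t' w' o) as [w Hw]; auto. exists w. split.
    apply (Lift_step t d t' q w' o w); auto.
    pose proof Hw as [W1 [W2 [W3 W4]]]. pose proof Hlub as [V1 [V2 [V3 V4]]].
    assert (le t' v w) by (apply V4; auto; apply (Lt t' u' w' w); auto).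
    apply (G3 t' q); auto. apply (G2 t' q o v); auto. apply (G2 t' q o w); auto. Qed.

Lemma lub_absorb (P : U -> Prop) (lee : U -> U -> Prop) a o' u' o j :
  poset P lee -> P a -> P o' -> P o -> is_lub P lee a o' u' -> lee o' o -> is_lub P lee u' o j -> is_lub P lee a o j.
Proof. intros [Pr [Pa Pt]] Ha Ho' Ho [U1 [U2 [U3 U4]]] Hoo [J1 [J2 [J3 J4]]].
  split; auto. split. apply (Pt a u' j); auto. split; auto.
  intros z Hz Haz Hoz. apply J4; auto. apply U4; auto. apply (Pt o' o z); auto. Qed.

Lemma JoinAgree t q p1 p2 j : leS t q -> Lc t p1 -> Lc q p1 -> Lc t p2 -> Lc q p2 ->
  is_lub (Lc t) (le t) p1 p2 j -> is_lub (Lc q) (le q) p1 p2 j.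
Proof. intros Htq A1 A2 B1 B2 Hj. destruct (Llub q p1 p2) as [j' Hj']; auto.
  assert (Lc t j') by (apply (G1j t q p1 p2 j'); auto).
  pose proof Hj as [J1 [J2 [J3 J4]]]. pose proof Hj' as [K1 [K2 [K3 K4]]].
  assert (Lc q j) by (apply (G2 t q p1 j); auto).
  assert (le q j' j) by (apply K4; auto; apply (G3 t q); auto).
  assert (le t j j') by (apply J4; auto; apply (G3' t q); auto).
  assert (le q j j') by (apply (G3 t q); auto).
  replace j with j'; auto. apply (La q); auto. Qed.

Lemma Uniq : forall q x a v w, Lift x a q v -> Lift x a q w -> v = w.
Proof.
  assert (Hm : forall q, fullset q -> forall x a v w, Lift x a q v -> Lift x a q w -> v = w).
  2:{ intro q; apply Hm; exact I. }
  refine (lt_ind _ _ Spo HSf _ _). intros q _ IH x a v w H1 H2.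
  assert (Key : forall t1 u1 o v1 t2 m u0, Lift x a t1 u1 -> leS t1 q -> t1 <> q ->
      Lc q o -> (forall z, Lc q z -> le q o z) -> Lc t1 o -> is_lub (Lc t1) (le t1) u1 o v1 ->
      Lc t2 o -> is_glb fullset leS t1 t2 m -> Lift x a m u0 -> is_lub (Lc m) (le m) u0 o v1).
  { intros t1 u1 o v1 t2 m u0 Hl1 Ht1q Hne1 Hqo Hbot Ht1o Hlub Ht2o Hm Hl0.
    pose proof Hm as [_ [Hmt1 [Hmt2 _]]]. assert (Hmo : Lc m o) by (apply (G4m t1 t2 m o); auto).
    destruct (LiftP _ _ _ _ Hl0) as [_ [_ [Hu0 _]]]. destruct (LiftP _ _ _ _ Hl1) as [_ [_ [Hu1 _]]].
    destruct (classic (m = t1)) as [E|E].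
    { subst m. rewrite (IH t1 I Ht1q Hne1 x a u0 u1 Hl0 Hl1). auto. }
    destruct (Lbot t1) as [o' [Ho' Ho'b]].
    assert (Hmo' : Lc m o') by (apply (G1 m t1 o o'); auto).
    destruct (Llub m u0 o') as [u' Hu']; auto.
    assert (Hl' : Lift x a t1 u') by (apply (Lift_step x a m t1 u0 o' u'); auto).
    rewrite (IH t1 I Ht1q Hne1 x a u1 u' Hl1 Hl') in Hlub.
    destruct (LiftP _ _ _ _ Hl') as [_ [_ [Hu't1 _]]]. pose proof Hu' as [Hu'm _].
    destruct (Llub m u' o) as [j Hj]; auto.
    assert (Hj1 : is_lub (Lc t1) (le t1) u' o j) by (apply (JoinAgree m t1); auto).
    rewrite (lub_unique _ _ (Lpo t1) _ _ _ _ Hlub Hj1).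
    apply (lub_absorb (Lc m) (le m) u0 o' u' o j); auto. apply Lpo.
    apply (G3' m t1); auto. }
  inversion H1 as [Ha1|t1 q1 u1 o1 v1 Hl1 Ht1 Hne1 Hqo1 Hb1 Hto1 Hlub1]; subst;
  inversion H2 as [Ha2|t2 q2 u2 o2 v2 Hl2 Ht2 Hne2 Hqo2 Hb2 Hto2 Hlub2]; subst; auto.
  - exfalso. destruct (LiftP _ _ _ _ Hl2) as [_ [Hxt _]]. apply Hne2. apply Sa; auto.
  - exfalso. destruct (LiftP _ _ _ _ Hl1) as [_ [Hxt _]]. apply Hne1. apply Sa; auto.
  - assert (o1 = o2) by (apply (La q); auto). subst o2.
    destruct (Sm t1 t2) as [m Hm]. pose proof Hm as [_ [Hmt1 [Hmt2 Hml]]].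
    destruct (LiftP _ _ _ _ Hl1) as [Hxa [Hxt1 _]]. destruct (LiftP _ _ _ _ Hl2) as [_ [Hxt2 _]].
    destruct (Lift_ex x a m) as [u0 Hu0]; auto. apply Hml; auto; exact I.
    assert (E1 := Key t1 u1 o1 v t2 m u0 Hl1 Ht1 Hne1 Hqo1 Hb1 Hto1 Hlub1 Hto2 Hm Hu0).
    assert (E2 := Key t2 u2 o1 w t1 m u0 Hl2 Ht2 Hne2 Hqo1 Hb1 Hto2 Hlub2 Hto1 (glb_comm _ _ _ _ _ Hm) Hu0).
    apply (lub_unique _ _ (Lpo m) _ _ _ _ E1 E2).
Qed.

Lemma LT a e : clos_trans U R a e -> forall x q v, Lc x a -> Lc q e -> leS x q -> Lift x a q v -> le q v e.
Proof. intro H. induction H as [a e Hae|a d e H1 IH1 H2 IH2]; intros x q v Hxa Hqe Hxq Hl.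
  - destruct Hae as [y [Hya [Hye Hle]]].
    destruct (Sm y q) as [m Hm]. pose proof Hm as [_ [Hmy [Hmq _]]].
    assert (Hme : Lc m e) by (apply (G4m y q m e); auto).
    assert (Hma : Lc m a) by (apply (G1 m y e a); auto).
    assert (le m a e) by (apply (G3' m y); auto).
    destruct (Sj m x) as [t Ht]. pose proof Ht as [_ [Hmt [Hxt Htl]]].
    assert (Hta : Lc t a) by (apply (G4j m x t a); auto).
    assert (Hte : Lc t e) by (apply (G2 m t a e); auto).
    assert (le t a e) by (apply (G3 m t); auto).
    assert (Htq : leS t q) by (apply Htl; auto; exact I).
    destruct (Ext x a x a (Lift_refl x a Hxa) t Hxt) as [w [Hw Hwp]].
    assert (le t w a) by (apply Hwp; auto; apply Lr; auto).
    destruct (LiftP _ _ _ _ Hw) as [_ [_ [Hwc _]]].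
    assert (le t w e) by (apply (Lt t w a e); auto).
    destruct (Ext x a t w Hw q Htq) as [v' [Hv' Hvp]].
    rewrite (Uniq q x a v v' Hl Hv'). apply Hvp; auto.
  - assert (Up d x) by (apply (UpProp a d x H1); exists x; split; auto; apply Sr).
    assert (Down d q) by (apply (DownProp d e q H2); exists q; split; auto; apply Sr).
    destruct (clamp d x q) as [t [Hxt [Htq Htd]]]; auto.
    destruct (Lift_ex x a t) as [w Hw]; auto.
    assert (Hwd : le t w d) by (apply (IH1 x t w); auto).
    destruct (Lift_ex t d q) as [vd Hvd]; auto.
    assert (le q vd e) by (apply (IH2 t q vd); auto).
    destruct (LiftP _ _ _ _ Hw) as [_ [_ [Hwc _]]].
    destruct (Lift_ex t w q) as [v'' Hv'']; auto.
    destruct (Mono t w q v'' Hv'' d Htd Hwd) as [w' [Hw' Hle']].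
    rewrite (Uniq q t d w' vd Hw' Hvd) in Hle'.
    assert (Hc := Comp t w q v'' Hv'' x a Hw).
    rewrite (Uniq q x a v v'' Hl Hc).
    destruct (LiftP _ _ _ _ Hv'') as [_ [_ [? _]]]. destruct (LiftP _ _ _ _ Hvd) as [_ [_ [? _]]].
    apply (Lt q v'' vd e); auto.
Qed.

Lemma lub4 (P : U -> Prop) (lee : U -> U -> Prop) v1 v2 u o v v1' v2' :
  poset P lee -> P v1 -> P v2 -> P o ->
  is_lub P lee v1 v2 u -> is_lub P lee u o v -> is_lub P lee v1 o v1' -> is_lub P lee v2 o v2' ->
  is_lub P lee v1' v2' v.
Proof. intros [Pr [Pa Pt]] H1 H2 Ho [U1 [U2 [U3 U4]]] [V1 [V2 [V3 V4]]] [A1 [A2 [A3 A4]]] [B1 [B2 [B3 B4]]].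
  split; auto. split. apply A4; auto. apply (Pt v1 u v); auto.
  split. apply B4; auto. apply (Pt v2 u v); auto.
  intros z Hz Hz1 Hz2. apply V4; auto. apply U4; auto. apply (Pt v1 v1' z); auto. apply (Pt v2 v2' z); auto.
  apply (Pt o v1' z); auto. Qed.

Lemma JoinPres z c q v : Lift z c q v -> forall c1 c2, Lc z c1 -> Lc z c2 -> is_lub (Lc z) (le z) c1 c2 c ->
  exists v1 v2, Lift z c1 q v1 /\ Lift z c2 q v2 /\ is_lub (Lc q) (le q) v1 v2 v.
Proof. intro H. induction H as [Ha|t q u o v H IH Htq Hne Hqo Hbot Hto Hlub]; intros c1 c2 H1 H2 Hc.
  - exists c1, c2. split. apply Lift_refl; auto. split. apply Lift_refl; auto. auto.
  - destruct (IH c1 c2 H1 H2 Hc) as [v1 [v2 [L1 [L2 Hu]]]].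
    destruct (LiftP _ _ _ _ L1) as [_ [_ [C1 _]]]. destruct (LiftP _ _ _ _ L2) as [_ [_ [C2 _]]].
    destruct (Llub t v1 o) as [v1' Hv1]; auto. destruct (Llub t v2 o) as [v2' Hv2]; auto.
    assert (L1' : Lift z c1 q v1') by (apply (Lift_step z c1 t q v1 o v1'); auto).
    assert (L2' : Lift z c2 q v2') by (apply (Lift_step z c2 t q v2 o v2'); auto).
    exists v1', v2'. split; auto. split; auto.
    destruct (LiftP _ _ _ _ L1') as [_ [_ [D1 _]]]. destruct (LiftP _ _ _ _ L2') as [_ [_ [D2 _]]].
    apply (JoinAgree t q); auto. apply Hv1. apply Hv2.
    apply (lub4 (Lc t) (le t) v1 v2 u o v v1' v2'); auto. apply Lpo. Qed.

Lemma gjoin x y z a b ua ub j : Lc x a -> Lc y b -> is_lub fullset leS x y z ->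
  Lift x a z ua -> Lift y b z ub -> is_lub (Lc z) (le z) ua ub j ->
  is_lub (glued_carrier Lc) (glued_le Lc le) a b j.
Proof. intros Ha Hb Hz Hla Hlb Hj. pose proof Hj as [J1 [J2 [J3 J4]]]. pose proof Hz as [_ [Hxz [Hyz Hzl]]].
  destruct (LiftP _ _ _ _ Hla) as [_ [_ [Cua Gua]]]. destruct (LiftP _ _ _ _ Hlb) as [_ [_ [Cub Gub]]].
  split. exists z; auto. split. apply t_trans with ua; auto. apply (gstep z); auto.
  split. apply t_trans with ub; auto. apply (gstep z); auto.
  intros e [r0 He] Hae Hbe.
  destruct (UpProp a e x Hae) as [r [Hxr Hr]]. exists x; split; auto; apply Sr.
  destruct (UpProp b e y Hbe) as [r' [Hyr' Hr']]. exists y; split; auto; apply Sr.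
  destruct (Sj r r') as [w Hw]. pose proof Hw as [_ [Hrw [Hr'w _]]].
  assert (Hwe : Lc w e) by (apply (G4j r r' w e); auto).
  assert (Hzw : leS z w) by (apply Hzl; auto; [exact I|apply (St x r w); auto|apply (St y r' w); auto]).
  destruct (Lift_ex z j w) as [vj Hvj]; auto.
  destruct (JoinPres z j w vj Hvj ua ub Cua Cub Hj) as [v1 [v2 [L1 [L2 Hv]]]].
  assert (le w v1 e) by (apply (LT a e Hae x w v1); auto; [apply (St x z w); auto|apply (Comp z ua w v1 L1 x a Hla)]).
  assert (le w v2 e) by (apply (LT b e Hbe y w v2); auto; [apply (St y z w); auto|apply (Comp z ub w v2 L2 y b Hlb)]).
  destruct (LiftP _ _ _ _ Hvj) as [_ [_ [Cvj Gvj]]].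
  apply t_trans with vj; auto. apply (gstep w); auto. apply Hv; auto. Qed.

Lemma gjoin_ex a b : glued_carrier Lc a -> glued_carrier Lc b ->
  exists j, is_lub (glued_carrier Lc) (glued_le Lc le) a b j.
Proof. intros [x Ha] [y Hb]. destruct (Sj x y) as [z Hz]. pose proof Hz as [_ [Hxz [Hyz _]]].
  destruct (Lift_ex x a z) as [ua Hua]; auto. destruct (Lift_ex y b z) as [ub Hub]; auto.
  destruct (LiftP _ _ _ _ Hua) as [_ [_ [Cua _]]]. destruct (LiftP _ _ _ _ Hub) as [_ [_ [Cub _]]].
  destruct (Llub z ua ub) as [j Hj]; auto. exists j. apply (gjoin x y z a b ua ub j); auto. Qed.

Lemma gposet : poset (glued_carrier Lc) (glued_le Lc le).
Proof. split; [|split].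
  - intros a [x Ha]. apply (gstep x); auto. apply Lr; auto.
  - intros a b Ha Hb H1 H2. apply gle_anti; auto.
  - intros a b c _ _ _ H1 H2. apply t_trans with b; auto. Qed.

Definition isMin d s := Lc s d /\ forall s', Lc s' d -> leS s s'.

Lemma min_ex x d : Lc x d -> exists s, isMin d s.
Proof. revert x. assert (Hm : forall x, fullset x -> Lc x d -> exists s, isMin d s).
  2:{ intros x; apply Hm; exact I. }
  refine (lt_ind _ _ Spo HSf _ _). intros x _ IH Hx.
  destruct (classic (forall s', Lc s' d -> leS x s')) as [H|H]. { exists x; split; auto. }
  apply not_all_ex_not in H as [s' Hs']. apply imply_to_and in Hs' as [Hs' Hn].
  destruct (Sm x s') as [m Hm]. pose proof Hm as [_ [Hmx [Hms _]]].
  apply (IH m I Hmx). intro E; subst; auto. apply (G4m x s' m d); auto. Qed.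

Lemma min_mono d d' s s' : clos_trans U R d d' -> isMin d s -> isMin d' s' -> leS s s'.
Proof. intros H [H1 H2] [H3 H4]. destruct (DownProp d d' s' H) as [p [Hp Hpd]].
  exists s'; split; auto; apply Sr. apply (St s p s'); auto. Qed.

Lemma combine (l : list S) (F : S -> U -> Prop) :
  (forall s, In s l -> exists ls, forall d, F s d -> In d ls) ->
  exists L, forall s d, In s l -> F s d -> In d L.
Proof. induction l as [|s0 l IH]; intro H. { exists nil. intros s d []. }
  destruct (H s0 (or_introl eq_refl)) as [l0 Hl0]. destruct IH as [L HL].
  { intros s Hs. apply H. right; auto. }
  exists (l0 ++ L). intros s d [E|Hs] Hd; apply in_or_app. subst; auto. right; eauto. Qed.

Lemma gfl : finite_length (glued_carrier Lc) (glued_le Lc le).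
Proof. intros C [HC1 HC2].
  destruct (HSf (fun s => exists d, C d /\ isMin d s)) as [ls Hls].
  { split. intros; exact I. intros s s' [d [Hd Hs]] [d' [Hd' Hs']].
    destruct (HC2 d d' Hd Hd') as [H|H]; [left|right]; eapply min_mono; eauto. }
  destruct (combine ls (fun s d => C d /\ isMin d s)) as [L HL].
  { intros s _. apply (Lfl s). split. intros d [_ [H _]]; auto.
    intros d d' [Hd [Hs _]] [Hd' [Hs' _]]. destruct (HC2 d d' Hd Hd') as [H|H]; [left|right]; apply K; auto. }
  exists L. intros d Hd. destruct (HC1 d Hd) as [x Hx]. destruct (min_ex x d Hx) as [s Hs].
  apply (HL s d); auto. apply Hls. eauto. Qed.

Lemma lift_cover x a w u : Lift x a w u -> covers (glued_carrier Lc) (glued_le Lc le) a u ->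
  exists s, Lc s a /\ Lc s u.
Proof. intro H. induction H as [Ha|t q u' o v H IH Htq Hne Hqo Hbot Hto Hlub]; intro Hc.
  - destruct Hc as [_ [_ [_ [E _]]]]. tauto.
  - destruct (LiftP _ _ _ _ H) as [_ [_ [Cu' Gu']]]. pose proof Hlub as [Cv [Hu'v _]].
    pose proof Hc as [Pa [Pv [Hav [Hne' Hcl]]]].
    destruct (Hcl u') as [E|E]; auto. exists t; auto. apply (gstep t); auto.
    + subst u'. exists t. auto.
    + subst u'. apply IH; auto. Qed.

Lemma cover_level a b : covers (glued_carrier Lc) (glued_le Lc le) a b -> exists s, Lc s a /\ Lc s b.
Proof. intros Hc. pose proof Hc as [[x Ha] [[y Hb] [Hab [Hne Hcl]]]].
  destruct (UpProp a b x Hab) as [r [Hxr Hr]]. exists x; split; auto; apply Sr.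
  destruct (Sj x y) as [w Hw]. destruct (Sj r y) as [j Hj].
  pose proof Hw as [_ [Hxw [Hyw Hwl]]]. pose proof Hj as [_ [Hrj [Hyj _]]].
  assert (Lc j b) by (apply (G4j r y j b); auto).
  assert (Hwb : Lc w b) by (apply (convex y w j b); auto; apply Hwl; auto; [exact I|apply (St x r j); auto]).
  destruct (Lift_ex x a w) as [u Hu]; auto.
  destruct (LiftP _ _ _ _ Hu) as [_ [_ [Cu Gu]]].
  assert (le w u b) by (apply (LT a b Hab x w u); auto).
  destruct (Hcl u) as [E|E]; auto. exists w; auto. apply (gstep w); auto.
  - subst u. exists w; auto.
  - subst u. apply (lift_cover x a w b); auto. Qed.

Lemma cover_in_level s a b : covers (glued_carrier Lc) (glued_le Lc le) a b -> Lc s a -> Lc s b ->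
  covers (Lc s) (le s) a b.
Proof. intros [Pa [Pb [Hab [Hne Hcl]]]] Ha Hb. split; auto. split; auto. split. apply K; auto.
  split; auto. intros z Hz H1 H2. apply Hcl. exists s; auto. apply (gstep s); auto. apply (gstep s); auto. Qed.

Lemma cover_of_level s a b : covers (Lc s) (le s) a b -> covers (glued_carrier Lc) (glued_le Lc le) a b.
Proof. intros [Ha [Hb [Hab [Hne Hcl]]]]. split. exists s; auto. split. exists s; auto.
  split. apply (gstep s); auto. split; auto. intros z _ H1 H2.
  assert (Lc s z). { apply inLevel. apply (UpProp a z s H1). exists s; split; auto; apply Sr.
    apply (DownProp z b s H2). exists s; split; auto; apply Sr. }
  apply Hcl; auto; apply K; auto. Qed.

Lemma gsemimod : (forall x, semimodular (Lc x) (le x)) -> semimodular (glued_carrier Lc) (glued_le Lc le).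
Proof. intros Hsm a b c j Pa Pb Pc Hbc Hab Hac Hj.
  destruct (cover_level a b Hab) as [s1 [A1 B1]]. destruct (cover_level a c Hac) as [s2 [A2 C2]].
  destruct (Sj s1 s2) as [w Hw]. pose proof Hw as [_ [H1w [H2w _]]].
  assert (Hwa : Lc w a) by (apply (G4j s1 s2 w a); auto).
  pose proof Hab as [_ [_ [Gab _]]]. pose proof Hac as [_ [_ [Gac _]]].
  assert (Hwb : Lc w b) by (apply (G2 s1 w a b); auto; apply K; auto).
  assert (Hwc : Lc w c) by (apply (G2 s2 w a c); auto; apply K; auto).
  destruct (Llub w b c) as [j' Hj']; auto.
  assert (Hww : is_lub fullset leS w w w).
  { split. exact I. split. apply Sr. split. apply Sr. intros; auto. }
  assert (Hjj : is_lub (glued_carrier Lc) (glued_le Lc le) b c j')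
    by (apply (gjoin w w w b c b c j'); auto; apply Lift_refl; auto).
  rewrite (lub_unique _ _ gposet _ _ _ _ Hj Hjj).
  destruct (Hsm w a b c j') as [X1 X2]; auto.
  apply cover_in_level; auto. apply cover_in_level; auto.
  split; apply (cover_of_level w); auto. Qed.

End Glued.

Lemma cover_flip {U} (P : U -> Prop) le u v : covers P le u v -> covers P (fun a b => le b a) v u.
Proof. intros [H1 [H2 [H3 [H4 H5]]]]. split; auto. split; auto. split; auto. split; auto.
  intros z Hz A B. destruct (H5 z Hz B A); auto. Qed.
Lemma cover_unflip {U} (P : U -> Prop) le u v : covers P (fun a b => le b a) v u -> covers P le u v.
Proof. intros [H1 [H2 [H3 [H4 H5]]]]. split; auto. split; auto. split; auto. split; auto.
  intros z Hz A B. destruct (H5 z Hz B A); auto. Qed.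

Section Upper.
Context {U : Type} (P : U -> Prop) (le : U -> U -> Prop).
Context (Hl : lattice P le) (Hf : finite_length P le) (Hu : semimodular P le).

Lemma lub_ex a b : P a -> P b -> exists j, is_lub P le a b j.
Proof. intros. apply Hl; auto. Qed.

Lemma upcov u v : covers P le u v -> forall t, P t -> le u t -> ~ le v t -> forall j, is_lub P le t v j -> covers P le t j.
Proof. intros Hc. pose proof Hc as [Pu [Pv [Huv [Hne Hcl]]]]. pose proof (proj1 Hl) as Hp.
  pose proof Hp as [Pr [Pa Ptr]].
  refine (lt_ind _ _ Hp Hf _ _). intros t Pt IH Hut Hvt j Hj.
  destruct (classic (t = u)) as [E|E].
  - subst t. assert (Hv : is_lub P le u v v) by (split; auto; split; auto; split; auto).
    rewrite (lub_unique _ _ Hp _ _ _ _ Hj Hv). exact Hc.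
  - destruct (lower_cover _ _ Hp Hf u t Pu Pt Hut (fun e => E (eq_sym e))) as [t' [Hut' Hct]].
    pose proof Hct as [Pt' [_ [Ht't [Hne' _]]]].
    assert (Hvt' : ~ le v t') by (intro; apply Hvt; apply (Ptr v t' t); auto).
    destruct (lub_ex t' v) as [j' Hj']; auto.
    assert (Hc' := IH t' Pt' Ht't Hne' Hut' Hvt' j' Hj').
    pose proof Hc' as [_ [Pj' [Ht'j' _]]]. pose proof Hj' as [_ [_ [Hvj' Hj'l]]].
    assert (Htj' : t <> j') by (intro E'; subst j'; auto).
    destruct (lub_ex t j') as [j'' Hj'']; auto.
    destruct (Hu t' t j' j'' Pt' Pt Pj' Htj' Hct Hc' Hj'') as [X _].
    assert (Hj3 : is_lub P le t v j'').
    { pose proof Hj'' as [J1 [J2 [J3 J4]]]. split; auto. split; auto. split. apply (Ptr v j' j''); auto.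
      intros z Hz A B. apply J4; auto. apply Hj'l; auto. apply (Ptr t' t z); auto. }
    rewrite (lub_unique _ _ Hp _ _ _ _ Hj Hj3). exact X.
Qed.

Lemma Uform u v w a b : covers P le u v -> P w -> is_lub P le u w a -> is_lub P le v w b -> a = b \/ covers P le a b.
Proof. intros Hc Pw Ha Hb. pose proof (proj1 Hl) as Hp. pose proof Hp as [Pr [Pa Ptr]].
  pose proof Hc as [Pu [Pv [Huv [Hne Hcl]]]].
  pose proof Ha as [A1 [A2 [A3 A4]]]. pose proof Hb as [B1 [B2 [B3 B4]]].
  destruct (classic (le v a)) as [H|H].
  - left. apply Pa; auto. apply A4; auto. apply (Ptr u v b); auto.
  - right. destruct (lub_ex a v) as [j Hj]; auto.
    assert (Hjb : is_lub P le v w b -> is_lub P le a v b).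
    { intros _. split; auto. split. apply A4; auto. apply (Ptr u v b); auto. split; auto.
      intros z Hz X Y. apply B4; auto. apply (Ptr w a z); auto. }
    rewrite <- (lub_unique _ _ Hp _ _ _ _ Hj (Hjb Hb)).
    apply (upcov u v Hc a A1 A2 H j Hj). Qed.
End Upper.

Section Birk.
Context {U : Type} (P : U -> Prop) (le : U -> U -> Prop).
Context (Hl : lattice P le) (Hf : finite_length P le) (Hu : semimodular P le)
  (Hd : semimodular P (fun a b => le b a)).

Lemma Lform u v w a b : covers P le u v -> P w -> is_glb P le u w a -> is_glb P le v w b -> a = b \/ covers P le a b.
Proof. intros Hc Pw Ha Hb.
  destruct (Uform P (fun a b => le b a) (lattice_dual _ _ Hl) (fl_dual _ _ Hf) Hd v u w b a (cover_flip _ _ _ _ Hc) Pw Hb Ha)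
    as [E|E]; auto. right. apply cover_unflip; auto. Qed.

Lemma glb_ex a b : P a -> P b -> exists j, is_glb P le a b j.
Proof. intros. apply Hl; auto. Qed.

Lemma NoPent : forall b, P b -> forall o, P o -> forall x y i, covers P le x y ->
  is_glb P le x b o -> is_glb P le y b o -> is_lub P le x b i -> is_lub P le y b i -> False.
Proof. pose proof (proj1 Hl) as Hp. pose proof Hp as [Pr [Pa Ptr]].
  refine (lt_ind _ _ Hp Hf _ _). intros b Pb IHb.
  refine (gt_ind _ _ Hp Hf _ _). intros o Po IHo x y i Hxy Gx Gy Jx Jy.
  pose proof Hxy as [Px [Py [Hxy' [Hnxy Hcxy]]]].
  pose proof Gx as [_ [Gx1 [Gx2 Gx3]]]. pose proof Gy as [_ [Gy1 [Gy2 Gy3]]].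
  pose proof Jx as [Pi [Jx1 [Jx2 Jx3]]]. pose proof Jy as [_ [Jy1 [Jy2 Jy3]]].
  assert (Hob : o <> b).
  { intro E. subst o. apply Hnxy. apply Pa; auto. apply (Ptr y i x); auto. }
  destruct (upper_cover _ _ Hp Hf o b Po Pb Gx2 Hob) as [b' [Hob' Hb'b]].
  pose proof Hob' as [_ [Pb' [Hob'' [Hneob' _]]]].
  assert (Gx' : is_glb P le x b' o).
  { split; auto. split; auto. split; auto. intros z Hz A B. apply Gx3; auto. apply (Ptr z b' b); auto. }
  assert (Gy' : is_glb P le y b' o).
  { split; auto. split; auto. split; auto. intros z Hz A B. apply Gy3; auto. apply (Ptr z b' b); auto. }
  assert (Hxo : is_lub P le o x x) by (split; auto; split; auto; split; auto; apply Pr; auto).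
  assert (Hyo : is_lub P le o y y) by (split; auto; split; auto; split; auto; apply Pr; auto).
  destruct (classic (b' = b)) as [E|E].
  - subst b'. destruct (Uform P le Hl Hf Hu o b x x i Hob' Px Hxo (lub_comm _ _ _ _ _ Jx)) as [E|E].
    + subst i. apply Hneob'. apply Pa; auto; apply Gx3; auto; apply Pr; auto.
    + pose proof E as [_ [_ [_ [Hne' Hcl']]]]. destruct (Hcl' y Py Hxy' Jy1) as [E'|E']; auto.
      subst y. apply Hneob'. apply Pa; auto; apply Gy3; auto; apply Pr; auto.
  - destruct (lub_ex _ _ Hl x b') as [x' Hx']; auto. destruct (lub_ex _ _ Hl y b') as [y' Hy']; auto.
    pose proof Hx' as [Px' [Hxx' [Hb'x' Hx'l]]]. pose proof Hy' as [Py' [Hyy' [Hb'y' Hy'l]]].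
    destruct (classic (x' = y')) as [E'|E'].
    + subst y'. apply (IHb b' Pb' Hb'b E o Po x y x'); auto.
    + destruct (Uform P le Hl Hf Hu x y b' x' y' Hxy Pb' Hx' Hy') as [E2|Hc']; [tauto|].
      assert (Cx : covers P le x x').
      { destruct (Uform P le Hl Hf Hu o b' x x x' Hob' Px Hxo (lub_comm _ _ _ _ _ Hx')) as [E3|E3]; auto.
        subst x'. exfalso. apply Hneob'. apply Pa; auto. }
      assert (Cy : covers P le y y').
      { destruct (Uform P le Hl Hf Hu o b' y y y' Hob' Py Hyo (lub_comm _ _ _ _ _ Hy')) as [E3|E3]; auto.
        subst y'. exfalso. apply Hneob'. apply Pa; auto. }
      assert (Mx : is_glb P le x' b b').
      { destruct (glb_ex x' b) as [p Hpp]; auto. pose proof Hpp as [Pp [Hp1 [Hp2 Hp3]]].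
        assert (Hb'p : le b' p) by (apply Hp3; auto).
        destruct (Lform x x' b o p Cx Pb Gx Hpp) as [E3|E3].
        - subst p. exfalso. apply Hneob'. apply Pa; auto.
        - pose proof E3 as [_ [_ [_ [_ Hcl3]]]]. destruct (Hcl3 b' Pb' Hob'' Hb'p) as [E4|E4].
          + subst; tauto.
          + subst; auto. }
      assert (My : is_glb P le y' b b').
      { destruct (glb_ex y' b) as [p Hpp]; auto. pose proof Hpp as [Pp [Hp1 [Hp2 Hp3]]].
        assert (Hb'p : le b' p) by (apply Hp3; auto).
        destruct (Lform y y' b o p Cy Pb Gy Hpp) as [E3|E3].
        - subst p. exfalso. apply Hneob'. apply Pa; auto.
        - pose proof E3 as [_ [_ [_ [_ Hcl3]]]]. destruct (Hcl3 b' Pb' Hob'' Hb'p) as [E4|E4].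
          + subst; tauto.
          + subst; auto. }
      assert (Ix : is_lub P le x' b i).
      { split; auto. split. apply Hx'l; auto. apply (Ptr b' b i); auto. split; auto.
        intros z Hz A B. apply Jx3; auto. apply (Ptr x x' z); auto. }
      assert (Iy : is_lub P le y' b i).
      { split; auto. split. apply Hy'l; auto. apply (Ptr b' b i); auto. split; auto.
        intros z Hz A B. apply Jy3; auto. apply (Ptr y y' z); auto. }
      apply (IHo b' Pb' Hob'' (fun e => Hneob' (eq_sym e)) x' y' i); auto.
Qed.

Lemma birkhoff : modular P le.
Proof. pose proof (proj1 Hl) as Hp. pose proof Hp as [Pr [Pa Ptr]].
  intros a b c m j1 j2 m2 Pa' Pb Pc Hac Hm Hj1 Hj2 Hm2.
  pose proof Hm as [Pm [Hmb [Hmc Hml]]]. pose proof Hj1 as [Pj1 [Haj1 [Hmj1 Hj1l]]].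
  pose proof Hj2 as [Pj2 [Haj2 [Hbj2 Hj2l]]]. pose proof Hm2 as [Pm2 [Hm2j2 [Hm2c Hm2l]]].
  assert (Hj1j2 : le j1 j2) by (apply Hj1l; auto; apply (Ptr m b j2); auto).
  assert (Hj1c : le j1 c) by (apply Hj1l; auto).
  assert (Hj1m2 : le j1 m2) by (apply Hm2l; auto).
  apply NNPP. intro Hne.
  destruct (upper_cover _ _ Hp Hf j1 m2 Pj1 Pm2 Hj1m2 Hne) as [y [Hcy Hym2]].
  pose proof Hcy as [_ [Py [Hj1y _]]].
  apply (NoPent b Pb m Pm j1 y j2 Hcy).
  - split; auto. split; auto. split; auto. intros z Hz A B. apply Hml; auto. apply (Ptr z j1 c); auto.
  - split; auto. split. apply (Ptr m j1 y); auto. split; auto.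
    intros z Hz A B. apply Hml; auto. apply (Ptr z y c); auto. apply (Ptr y m2 c); auto.
  - split; auto. split; auto. split; auto. intros z Hz A B. apply Hj2l; auto. apply (Ptr a j1 z); auto.
  - split; auto. split. apply (Ptr y m2 j2); auto. split; auto.
    intros z Hz A B. apply Hj2l; auto. apply (Ptr a y z); auto. apply (Ptr a j1 y); auto.
Qed.
End Birk.

Lemma mod_semimod {U} (P : U -> Prop) le : lattice P le -> modular P le -> semimodular P le.
Proof. intros Hl Hmod a b c j Pa Pb Pc Hbc Hab Hac Hj.
  pose proof (proj1 Hl) as Hp. pose proof Hp as [Pr [Pa' Ptr]].
  pose proof Hab as [_ [_ [Hab' [Hnab Hclb]]]]. pose proof Hac as [_ [_ [Hac' [Hnac Hclc]]]].
  pose proof Hj as [Pj [Hbj [Hcj Hjl]]].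
  assert (Gen : forall b c, P b -> P c -> b <> c -> covers P le a b -> covers P le a c ->
     is_lub P le b c j -> covers P le b j).
  { clear b c Pb Pc Hbc Hab Hac Hab' Hnab Hclb Hac' Hnac Hclc Hj Pj Hbj Hcj Hjl.
    intros b c Pb Pc Hbc Hab Hac Hj.
    pose proof Hab as [_ [_ [Hab' [Hnab Hclb]]]]. pose proof Hac as [_ [_ [Hac' [Hnac Hclc]]]].
    pose proof Hj as [Pj [Hbj [Hcj Hjl]]].
    split; auto. split; auto. split; auto. split.
    { intro E. subst j. destruct (Hclb c Pc Hac' Hcj); subst; tauto. }
    intros z Pz Hbz Hzj.
    destruct (Hl) as [_ [_ Hl2]]. destruct (Hl2 c z Pc Pz) as [_ [m Hm]].
    pose proof Hm as [Pm [Hmc [Hmz Hml]]].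
    destruct (Hl2 b m Pb Pm) as [[j1 Hj1] _].
    assert (Hm2 : is_glb P le j z z) by (split; auto; split; auto; split; auto; apply Pr; auto).
    assert (E := Hmod b c z m j1 j z Pb Pc Pz Hbz Hm Hj1 Hj Hm2). subst j1.
    assert (Ham : le a m) by (apply Hml; auto; apply (Ptr a b z); auto).
    destruct (Hclc m Pm Ham Hmc) as [E|E]; subst m.
    - left. apply (lub_unique _ _ Hp b a); auto. split; [auto|split; [apply Pr; auto|split; auto]].
    - right. apply (lub_unique _ _ Hp b c); auto. }
  split. apply (Gen b c); auto. apply (Gen c b); auto. apply lub_comm; auto. Qed.

Lemma mod_dual {U} (P : U -> Prop) le : modular P le -> modular P (fun a b => le b a).
Proof. intros Hmod a b c m j1 j2 m2 Pa Pb Pc Hca Hm Hj1 Hj2 Hm2. symmetry.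
  apply (Hmod c b a j2 m2 m j1 Pc Pb Pa Hca).
  apply glb_comm; exact Hj2. apply lub_comm; exact Hm2. apply lub_comm; exact Hm. apply glb_comm; exact Hj1. Qed.

Lemma ideal_ext {U} (P : U -> Prop) le (F F' : U -> Prop) : (forall a, F a <-> F' a) -> ideal_of P le F -> ideal_of P le F'.
Proof. intros E [[a Ha] [H1 [H2 H3]]]. split. exists a; apply E; auto. split. intros b Hb; apply H1, E; auto.
  split. intros b c Hb Hc Hcb. apply E. apply (H2 b c); auto. apply E; auto.
  intros b c j Hb Hc Hj. apply E. apply (H3 b c j); auto; apply E; auto. Qed.
Lemma filter_ext {U} (P : U -> Prop) le (F F' : U -> Prop) : (forall a, F a <-> F' a) -> filter_of P le F -> filter_of P le F'.
Proof. intros E [[a Ha] [H1 [H2 H3]]]. split. exists a; apply E; auto. split. intros b Hb; apply H1, E; auto.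
  split. intros b c Hb Hc Hcb. apply E. apply (H2 b c); auto. apply E; auto.
  intros b c j Hb Hc Hj. apply E. apply (H3 b c j); auto; apply E; auto. Qed.

Lemma dual_glued {S U} (leS : S -> S -> Prop) (Lc : S -> U -> Prop) le :
  glued_system leS Lc le -> glued_system (fun x y => leS y x) Lc (fun x a b => le x b a).
Proof. intros [H0 [H1 [H2 [H3 H4]]]]. split; [|split; [|split; [|split]]].
  - intro x. destruct (H0 x) as [A B]. split. exact (lattice_dual _ _ A). exact (fl_dual _ _ B).
  - intros x y Hyx [a [Ha1 Ha2]]. destruct (H1 y x Hyx (ex_intro _ a (conj Ha2 Ha1))) as [Hf Hi]. split.
    + exact (ideal_ext _ _ _ _ (fun a => conj (fun h : Lc y a /\ Lc x a => conj (proj2 h) (proj1 h))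
        (fun h : Lc x a /\ Lc y a => conj (proj2 h) (proj1 h))) Hi).
    + exact (filter_ext _ _ _ _ (fun a => conj (fun h : Lc y a /\ Lc x a => conj (proj2 h) (proj1 h))
        (fun h : Lc x a /\ Lc y a => conj (proj2 h) (proj1 h))) Hf).
  - intros x y a b Hyx Hxa Hya Hxb Hyb. symmetry. apply (H2 y x b a); auto.
  - intros x y Hc. destruct (H3 y x (cover_unflip _ _ _ _ Hc)) as [a [A B]]. eauto.
  - intros x y m j a Hm Hj Hxa Hya. destruct (H4 x y j m a Hj Hm Hxa Hya). auto.
Qed.

Lemma gle_dual_eq {S U} (Lc : S -> U -> Prop) le :
  glued_le Lc (fun x a b => le x b a) = (fun a b => glued_le Lc le b a).
Proof. apply functional_extensionality; intro a. apply functional_extensionality; intro b.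
  apply propositional_extensionality. unfold glued_le. split; intro H.
  - induction H as [a b [x [A [B C]]]|a c b H1 IH1 H2 IH2]. apply t_step. exists x; auto.
    apply t_trans with c; auto.
  - induction H as [a b [x [A [B C]]]|a c b H1 IH1 H2 IH2]. apply t_step. exists x; auto.
    apply t_trans with c; auto. Qed.

Theorem theorem3p2 (S U : Type) (leS : S -> S -> Prop)
    (Lc : S -> U -> Prop) (le : S -> U -> U -> Prop) :
  lattice fullset leS -> finite_length fullset leS ->
  glued_system leS Lc le ->
  ((forall x, semimodular (Lc x) (le x)) ->
     lattice (glued_carrier Lc) (glued_le Lc le) /\
     finite_length (glued_carrier Lc) (glued_le Lc le) /\
     semimodular (glued_carrier Lc) (glued_le Lc le)) /\
  ((forall x, modular (Lc x) (le x)) ->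
     lattice (glued_carrier Lc) (glued_le Lc le) /\
     finite_length (glued_carrier Lc) (glued_le Lc le) /\
     modular (glued_carrier Lc) (glued_le Lc le)).
Proof.
  intros HSl HSf HG.
  pose proof (lattice_dual _ _ HSl) as HSl'. pose proof (fl_dual _ _ HSf) as HSf'.
  pose proof (dual_glued _ _ _ HG) as HG'.
  assert (HL : lattice (glued_carrier Lc) (glued_le Lc le)).
  { split. apply (gposet leS Lc le HSl HSf HG). split.
    - destruct HSl as [_ [[x _] _]]. destruct (Lbot leS Lc le HG x) as [o [Ho _]]. exists o, x. exact Ho.
    - intros a b Ha Hb. split. apply (gjoin_ex leS Lc le HSl HSf HG); auto.
      destruct (gjoin_ex _ _ _ HSl' HSf' HG' a b Ha Hb) as [j Hj].
      rewrite gle_dual_eq in Hj. exists j. exact Hj. }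
  assert (HF := gfl leS Lc le HSl HSf HG).
  assert (Hlx : forall x, lattice (Lc x) (le x)) by (intro x; apply HG).
  split.
  - intros Hsm. split; auto. split; auto. apply (gsemimod leS Lc le HSl HSf HG); auto.
  - intros Hmod. split; auto. split; auto. apply birkhoff; auto.
    + apply (gsemimod leS Lc le HSl HSf HG). intro x. apply mod_semimod; auto.
    + pose proof (gsemimod _ _ _ HSl' HSf' HG'
        (fun x => mod_semimod _ _ (lattice_dual _ _ (Hlx x)) (mod_dual _ _ (Hmod x)))) as H.
      rewrite gle_dual_eq in H. exact H.
Qed.
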